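(* Let $s\in\mathbb N$, $R,p,\beta>0$, and let $\mathcal G$ be an $s$-uniform hypergraph. If $\mathcal G[W]$ is $(p,R)$-Janson for every $W\subset V(\mathcal G)$ with $|W|\ge(1-\beta)v(\mathcal G)$, then there exists $\mu:\mathcal G\to\mathbb R_{\ge0}$ with $$e(\mu)=\sqrt R,\qquad\Lambda_p(\mu)<\frac{e(\mu)^2}{R}\qquad\text{and}\qquad\sum_{v\in V(\mathcal G)}d_\mu(v)^2\le\frac{2s^2e(\mu)^2}{\beta\,v(\mathcal G)}.$$
   Context: A hypergraph is identified with its edge set; $v(\mathcal G)=|V(\mathcal G)|$; $\mathcal G[W]=\{E\in\mathcal G:E\subset W\}$. For $\nu:\mathcal G\to\mathbb R_{\ge0}$: $e(\nu)=\sum_E\nu(E)$, $d_\nu(L)=\sum_{E\in\mathcal G,L\subset E}\nu(E)$ (with $d_\nu(v)=d_\nu(\{v\})$), $\Lambda_p(\nu)=\sum_{L\subset V(\mathcal G),|L|\ge2}d_\nu(L)^2p^{-|L|}$. $\mathcal G$ is $(p,R)$-Janson if some $\nu:\mathcal G\to\mathbb R_{\ge0}$ has $\Lambda_p(\nu)<e(\nu)^2/R$. *)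

(* Defs.v *)
(* Hypergraph on vertex type T : finType (V(G) = T),
   identified with its edge set G : {set {set T}}. *)
From mathcomp Require Import all_boot all_order all_algebra.
From mathcomp Require Import reals.
Set Implicit Arguments. Unset Strict Implicit. Unset Printing Implicit Defensive.
Import Order.TTheory GRing.Theory Num.Theory.
Local Open Scope ring_scope.

Section Hyper.
Variables (K : realType) (T : finType).

Definition induced (G : {set {set T}}) (W : {set T}) : {set {set T}} :=
  [set E in G | E \subset W].

Definition uniform (s : nat) (G : {set {set T}}) : Prop :=
  forall E, E \in G -> #|E| = s.

(* nu : G -> R_{>=0} (values outside G are irrelevant) *)
Definition nonneg_weight (G : {set {set T}}) (nu : {set T} -> K) : Prop :=
  forall E, E \in G -> 0 <= nu E.

Definition ew (G : {set {set T}}) (nu : {set T} -> K) : K :=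
  \sum_(E in G) nu E.

Definition deg (G : {set {set T}}) (nu : {set T} -> K) (L : {set T}) : K :=
  \sum_(E in G | L \subset E) nu E.

Definition Lambda (p : K) (G : {set {set T}}) (nu : {set T} -> K) : K :=
  \sum_(L : {set T} | (1 < #|L|)%N) (deg G nu L) ^+ 2 * p ^- #|L|.

Definition janson (p R : K) (G : {set {set T}}) : Prop :=
  exists nu : {set T} -> K,
    nonneg_weight G nu /\ Lambda p G nu < (ew G nu) ^+ 2 / R.

End Hyper.

(* Main.v *)
Require Import Defs.
From mathcomp Require Import all_boot all_order all_algebra.
From mathcomp Require Import reals.
From mathcomp Require Import ring lra.
Import Order.TTheory GRing.Theory Num.Theory.
Local Open Scope ring_scope.

Section Aux.
Variables (K : realType) (T : finType) (G : {set {set T}}) (p : K).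
Hypothesis hp : 0 < p.

Lemma deg_mix (a b : K) x y L :
  deg G (fun E => a * x E + b * y E) L = a * deg G x L + b * deg G y L.
Proof. by rewrite /deg big_split /= -!mulr_sumr. Qed.

Lemma ew_mix (a b : K) x y :
  ew G (fun E => a * x E + b * y E) = a * ew G x + b * ew G y.
Proof. by rewrite /ew big_split /= -!mulr_sumr. Qed.

Lemma deg_scale (a : K) x L : deg G (fun E => a * x E) L = a * deg G x L.
Proof. by rewrite /deg -mulr_sumr. Qed.

Lemma ew_scale (a : K) x : ew G (fun E => a * x E) = a * ew G x.
Proof. by rewrite /ew -mulr_sumr. Qed.

Lemma Lambda_scale (a : K) x : Lambda p G (fun E => a * x E) = a ^+ 2 * Lambda p G x.
Proof.
rewrite /Lambda mulr_sumr; apply: eq_bigr => L _.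
by rewrite deg_scale exprMn mulrA.
Qed.

Lemma Lambda_mix (t : K) x y : 0 <= t <= 1 ->
  Lambda p G (fun E => (1 - t) * x E + t * y E)
   <= (1 - t) * Lambda p G x + t * Lambda p G y.
Proof.
move=> /andP[t0 t1].
rewrite /Lambda !mulr_sumr -big_split /=; apply: ler_sum => L _.
rewrite deg_mix.
set a := deg G x L; set b := deg G y L; set c := p ^- #|L|.
have c0 : 0 <= c by rewrite /c invr_ge0 exprn_ge0 // ltW.
have -> : (1 - t) * (a ^+ 2 * c) + t * (b ^+ 2 * c)
   = ((1 - t) * a + t * b) ^+ 2 * c + t * (1 - t) * (a - b) ^+ 2 * c by ring.
rewrite lerDl; apply: mulr_ge0 => //; apply: mulr_ge0; last exact: sqr_ge0.
by apply: mulr_ge0 => //; rewrite subr_ge0.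
Qed.

Lemma Lambda_ge0 (x : {set T} -> K) : 0 <= Lambda p G x.
Proof.
apply: sumr_ge0 => L _; apply: mulr_ge0; first exact: sqr_ge0.
by rewrite invr_ge0 exprn_ge0 // ltW.
Qed.

Lemma deg_ge0 (x : {set T} -> K) L : nonneg_weight G x -> 0 <= deg G x L.
Proof. by move=> hx; apply: sumr_ge0 => E /andP[/hx]. Qed.

Lemma deg_le_ew (x : {set T} -> K) L : nonneg_weight G x -> deg G x L <= ew G x.
Proof.
move=> hx; rewrite /deg /ew big_mkcondr /=; apply: ler_sum => E /hx h.
by case: ifP.
Qed.

Lemma sum_deg s (x : {set T} -> K) : uniform s G ->
  \sum_(v : T) deg G x [set v] = s%:R * ew G x.
Proof.
move=> hu; rewrite /deg /ew.
under eq_bigr => v _ do rewrite big_mkcondr /=.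
rewrite exchange_big /= mulr_sumr; apply: eq_bigr => E hE.
rewrite -big_mkcond /=.
under eq_bigl => v do rewrite sub1set.
by rewrite sumr_const hu // mulr_natl.
Qed.

End Aux.

Section Aux2.
Variables (K : realType) (T : finType) (G : {set {set T}}) (p R : K).
Hypothesis hp : 0 < p.
Hypothesis hR : 0 < R.

Lemma normalize W : janson p R (induced G W) ->
  exists nu : {set T} -> K, [/\ nonneg_weight G nu, ew G nu = 1,
    Lambda p G nu < 1 / R & forall v, v \notin W -> deg G nu [set v] = 0].
Proof.
case=> nu [hnn hlt].
set e := ew (induced G W) nu in hlt.
have e0 : 0 <= e by apply: sumr_ge0 => E /hnn.
have e2 : 0 < e ^+ 2 / R.
  by apply: le_lt_trans hlt; apply: Lambda_ge0.
have en0 : e != 0.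
  by apply/eqP => h; move: e2; rewrite h expr0n /= mul0r ltxx.
have epos : 0 < e by rewrite lt_def en0.
pose nu' E := if E \in induced G W then e^-1 * nu E else 0.
have hsum : forall P : pred {set T},
   \sum_(E in G | P E) nu' E = e^-1 * \sum_(E in induced G W | P E) nu E.
  move=> P; rewrite big_mkcond [X in _ = _ * X]big_mkcond mulr_sumr; apply: eq_bigr => E _.
  rewrite /nu' !inE.
  by case: (E \in G); case: (E \subset W); case: (P E); rewrite /= ?mulr0.
have hdeg : forall L, deg G nu' L = e^-1 * deg (induced G W) nu L.
  by move=> L; rewrite /deg hsum.
have hew : ew G nu' = 1.
  have h1 : \sum_(E in G) nu' E = \sum_(E in G | xpredT E) nu' E.
    by apply: eq_bigl => E; rewrite andbT.
  have h2 : e = \sum_(E in induced G W | xpredT E) nu E.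
    by rewrite /e /ew; apply: eq_bigl => E; rewrite andbT.
  by rewrite /ew h1 hsum -h2 mulVf.
exists nu'; split => //.
- move=> E hE; rewrite /nu'; case: ifP => // hi; apply: mulr_ge0.
    by rewrite invr_ge0.
  exact: hnn.
- rewrite /Lambda.
  under eq_bigr => L _ do rewrite hdeg exprMn -mulrA.
  rewrite -mulr_sumr -/(Lambda p (induced G W) nu).
  have -> : 1 / R = e^-1 ^+ 2 * (e ^+ 2 / R).
    by rewrite mulrA -exprMn mulVf // expr1n.
  rewrite ltr_pM2l //; apply: exprn_gt0; by rewrite invr_gt0.
- move=> v hv; rewrite hdeg /deg big1 ?mulr0 // => E /andP[].
  rewrite inE => /andP[_ /subsetP sub]; rewrite sub1set => /sub hw.
  by rewrite hw in hv.
Qed.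
End Aux2.

Section Main.
Variables (K : realType) (T : finType) (G : {set {set T}}) (s : nat) (p R beta : K).
Hypothesis hp : 0 < p.
Hypothesis hR : 0 < R.
Hypothesis hbeta : 0 < beta.
Hypothesis hu : uniform s G.
Hypothesis hJ : forall W : {set T}, (1 - beta) * #|T|%:R <= #|W|%:R ->
      janson p R (induced G W).

Definition Q (x : {set T} -> K) := \sum_(v : T) deg G x [set v] ^+ 2.
Definition Good (x : {set T} -> K) :=
  [/\ nonneg_weight G x, ew G x = 1 & Lambda p G x < 1 / R].

Lemma Q_le_s x : Good x -> Q x <= s%:R.
Proof.
case=> hn he _.
have -> : (s%:R : K) = \sum_v deg G x [set v] by rewrite (@sum_deg K T G s _ hu) he mulr1.
apply: ler_sum => v _.
have d0 := @deg_ge0 K T G x [set v] hn.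
have d1 : deg G x [set v] <= 1 by rewrite -he; apply: deg_le_ew.
by rewrite expr2 ler_piMr.
Qed.

Hypothesis hs : (0 < s)%N.
Hypothesis hn : (0 < #|T|)%N.
Let n : K := #|T|%:R.
Let sK : K := s%:R.
Let B : K := sK ^+ 2 / (beta * n).
Let th : K := sK / (beta * n).
Let dl : K := B ^+ 2 / sK.

Lemma n_gt0 : 0 < n. Proof. by rewrite /n ltr0n. Qed.
Lemma s_gt0 : 0 < sK. Proof. by rewrite /sK ltr0n. Qed.
Lemma th_gt0 : 0 < th.
Proof. by rewrite /th divr_gt0 ?s_gt0 // mulr_gt0 // n_gt0. Qed.
Lemma B_ge0 : 0 <= B.
Proof. by rewrite /B ltW // divr_gt0 ?exprn_gt0 ?s_gt0 // mulr_gt0 // n_gt0. Qed.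
Lemma dl_gt0 : 0 < dl.
Proof.
rewrite /dl divr_gt0 ?s_gt0 // exprn_gt0 // /B.
by rewrite divr_gt0 ?exprn_gt0 ?s_gt0 // mulr_gt0 // n_gt0.
Qed.

Lemma step x : Good x -> 2 * B < Q x -> exists y, Good y /\ Q y <= Q x - dl.
Proof.
move=> gx hq; have [xn xe xl] := gx.
pose W := [set v | deg G x [set v] <= th].
have hW : (1 - beta) * n <= #|W|%:R.
  have hc : #|~: W|%:R * th <= sK.
    rewrite mulrC mulr_natr -sumr_const.
    apply: (@le_trans _ _ (\sum_(v in ~: W) deg G x [set v])).
      apply: ler_sum => v; rewrite !inE => /negP h; apply: ltW.
      by rewrite ltNge; apply/negP.
    apply: (@le_trans _ _ (\sum_v deg G x [set v])).
      rewrite [X in _ <= X](bigID (fun v => v \in ~: W)) /= lerDl.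
      by apply: sumr_ge0 => v _; apply: deg_ge0.
    by rewrite (@sum_deg K T G s _ hu) xe mulr1.
  have hc' : (#|~: W|%:R : K) <= beta * n.
    have -> : beta * n = sK / th.
      have := s_gt0; have := n_gt0 => h1 h2.
      rewrite /th; field.
      by apply/and3P; split; apply: lt0r_neq0; rewrite ?ltr0n.
    by rewrite (ler_pdivlMr _ _ th_gt0).
  have hcard := cardsC W.
  have -> : (#|W|%:R : K) = n - #|~: W|%:R.
    by rewrite /n -hcard natrD addrK.
  by rewrite mulrBl mul1r lerB.
have [nu [nun nue nul nuW]] := @normalize K T G p R hp W (hJ W hW).
pose C := \sum_v deg G x [set v] * deg G nu [set v].
have hC : C <= B.
  apply: (@le_trans _ _ (\sum_v th * deg G nu [set v])).
    apply: ler_sum => v _.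
    case: (boolP (v \in W)) => hv.
      rewrite ler_wpM2r //; first exact: deg_ge0.
      by move: hv; rewrite inE.
    by rewrite nuW // !mulr0.
  rewrite -mulr_sumr (@sum_deg K T G s _ hu) nue mulr1 /th /B.
  by rewrite expr2 mulrAC mulrC mulrA.
set q := Q x.
have hq2 : 2 * B < q := hq.
have q0 : 0 <= q by rewrite /q /Q; apply: sumr_ge0 => v _; exact: sqr_ge0.
have qs : q <= sK := Q_le_s x gx.
have hs0 := s_gt0.
pose t := q / (2 * sK).
have ts : t * sK * 2 = q.
  by rewrite /t; field; rewrite lt0r_neq0 // ltr0n.
have B0 := B_ge0.
have t0 : 0 < t by rewrite /t divr_gt0 ?mulr_gt0 //; apply: le_lt_trans hq; rewrite mulr_ge0.
have t1 : t <= 1 / 2.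
  rewrite ler_pdivlMr // -(ler_pM2r hs0) mulrAC ts mul1r; lra.
pose y E := (1 - t) * x E + t * nu E.
have gy : Good y.
  split.
  - move=> E hE; rewrite /y; apply: addr_ge0; apply: mulr_ge0; rewrite ?xn ?nun //; lra.
  - by rewrite ew_mix xe nue; ring.
  - apply: le_lt_trans (@Lambda_mix K T G p hp t x nu _) _; first by apply/andP; split; lra.
    have h1 : (1 - t) * Lambda p G x <= (1 - t) * (1 / R).
      by rewrite ler_wpM2l ?ltW //; lra.
    have h2 : t * Lambda p G nu < t * (1 / R) by rewrite ltr_pM2l.
    have : (1 - t) * (1 / R) + t * (1 / R) = 1 / R by ring.
    move=> <-; exact: ler_ltD h1 h2.
exists y; split => //.
have hQnu : Q nu <= sK := Q_le_s nu (And3 nun nue nul).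
have hQy : Q y = (1 - t) ^+ 2 * q + 2 * t * (1 - t) * C + t ^+ 2 * Q nu.
  rewrite /q /Q /C !mulr_sumr -!big_split /=; apply: eq_bigr => v _.
  rewrite deg_mix; ring.
rewrite hQy.
have hC0 : 0 <= 2 * t * (1 - t) by apply: mulr_ge0; [apply: mulr_ge0|]; lra.
have e1 : 2 * t * (1 - t) * C <= 2 * t * (1 - t) * B by rewrite ler_wpM2l.
have e2 : t ^+ 2 * Q nu <= t ^+ 2 * sK by rewrite ler_wpM2l // sqr_ge0.
have e3 : 2 * t * (1 - t) * B <= t * (1 - t) * q.
  have : 0 <= t * (1 - t) * (q - 2 * B).
    by apply: mulr_ge0; [apply: mulr_ge0|]; lra.
  move=> h; rewrite -subr_ge0; apply: le_trans h _; rewrite le_eqVlt; apply/orP; left; apply/eqP; ring.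
have e4 : dl <= t * q / 2.
  rewrite -(ler_pM2r hs0).
  have -> : dl * sK = B ^+ 2 by rewrite /dl; field; rewrite lt0r_neq0.
  have -> : t * q / 2 * sK = q ^+ 2 / 4.
    have -> : t * q / 2 * sK = q * (t * sK * 2) / 4 by field.
    by rewrite ts expr2.
  rewrite ler_pdivlMr //.
  have : 0 <= (q - 2 * B) * (q + 2 * B) by apply: mulr_ge0; lra.
  move=> h; rewrite -subr_ge0; apply: le_trans h _; rewrite le_eqVlt; apply/orP; left; apply/eqP; ring.
have e5 : t ^+ 2 * sK = t * q / 2.
  have -> : t ^+ 2 * sK = t * (t * sK * 2) / 2 by field.
  by rewrite ts.
have : (1 - t) ^+ 2 * q + t * (1 - t) * q + t * q / 2 <= q - dl.
  have -> : (1 - t) ^+ 2 * q + t * (1 - t) * q + t * q / 2 = q - t * q / 2 by field.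
  by rewrite lerB.
move=> h; apply: le_trans h.
apply: le_trans (lerD (lerD (lexx _) e1) e2) _.
by rewrite e5 lerD2r lerD2l.
Qed.

Lemma iter k : forall x, Good x -> Q x <= 2 * B + k%:R * dl ->
  exists y, Good y /\ Q y <= 2 * B.
Proof.
elim: k => [|k IH] x gx hx.
  by exists x; split => //; rewrite mul0r addr0 in hx.
case: (lerP (Q x) (2 * B)) => h; first by exists x.
have [y [gy hy]] := step x gx h.
apply: (IH y gy); apply: le_trans hy _.
rewrite -natr1 mulrDl mul1r in hx; lra.
Qed.

Lemma final_good x0 : Good x0 -> exists y, Good y /\ Q y <= 2 * (s%:R ^+ 2 / (beta * #|T|%:R)).
Proof.
move=> gx0.
have hd := dl_gt0.
have h0 : 0 <= sK / dl by rewrite divr_ge0 // ?ltW // s_gt0.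
have := archi_boundP h0.
set k := Num.Def.archi_bound _ => hk.
apply: (iter k x0 gx0).
have : sK <= k%:R * dl by rewrite -ler_pdivrMr // ltW.
have := Q_le_s x0 gx0; have := B_ge0; rewrite /sK /B /n; lra.
Qed.
End Main.

Theorem lemma7p5 (K : realType) (s : nat) (R p beta : K)
  (hR : 0 < R) (hp : 0 < p) (hbeta : 0 < beta)
  (T : finType) (G : {set {set T}}) :
  uniform s G ->
  (forall W : {set T}, (1 - beta) * #|T|%:R <= #|W|%:R ->
      janson p R (induced G W)) ->
  exists mu : {set T} -> K,
    [/\ nonneg_weight G mu,
        ew G mu = Num.sqrt R,
        Lambda p G mu < (ew G mu) ^+ 2 / R &
        \sum_(v : T) (deg G mu [set v]) ^+ 2
          <= 2 * (s%:R) ^+ 2 * (ew G mu) ^+ 2 / (beta * #|T|%:R)].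
Proof.
move=> hu hJ.
have hT : (1 - beta) * #|T|%:R <= #|[set: T]|%:R.
  rewrite cardsT mulrBl mul1r lerBlDr lerDl mulr_ge0 // ?ltW //.
have [x0 [x0n x0e x0l _]] := @normalize K T G p R hp setT (hJ _ hT).
have gx0 : @Good K T G p R x0 by split.
have [y [gy hy]] : exists y, @Good K T G p R y /\
    @Q K T G y <= 2 * (s%:R ^+ 2 / (beta * #|T|%:R)).
  have rhs0 : 0 <= 2 * (s%:R ^+ 2 / (beta * #|T|%:R) : K).
    apply: mulr_ge0 => //; apply: divr_ge0; first exact: sqr_ge0.
    by apply: mulr_ge0; [exact: ltW | exact: ler0n].
  case: (posnP s) => hs.
    exists x0; split => //; rewrite /Q big1 //.
    move=> v _; rewrite /deg big1 ?expr0n // => E /andP[/hu hE].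
    rewrite sub1set; move: hE; rewrite hs => /cards0_eq ->; by rewrite inE.
  case: (posnP #|T|) => hn.
    exists x0; split => //; rewrite /Q big1 //.
    by move=> v _; have := card0_eq hn v; rewrite !inE.
  exact: (@final_good K T G s p R beta hp hbeta hu hJ hs hn x0 gx0).
have [yn ye yl] := gy.
have sR0 : 0 <= Num.sqrt R := sqrtr_ge0 R.
have sR2 : Num.sqrt R ^+ 2 = R by rewrite sqr_sqrtr // ltW.
exists (fun E => Num.sqrt R * y E); split.
- by move=> E hE; apply: mulr_ge0 => //; apply: yn.
- by rewrite ew_scale ye mulr1.
- rewrite Lambda_scale ew_scale ye mulr1 sR2 divff ?lt0r_neq0 //.
  by move: yl; rewrite -(ltr_pM2l hR) div1r divff ?lt0r_neq0.
- under eq_bigr => v _ do rewrite deg_scale exprMn sR2.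
  rewrite -mulr_sumr ew_scale ye mulr1 sR2.
  have -> : 2 * s%:R ^+ 2 * R / (beta * #|T|%:R) = R * (2 * (s%:R ^+ 2 / (beta * #|T|%:R))) by ring.
  by rewrite ler_wpM2l // ltW.
Qed.
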